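(* Let $R$ be a ring, $M$ a nonzero left $R$-module, $\Omega$ an infinite set, and $E=\mathrm{End}_R(\bigoplus_{i\in\Omega}M)$ or $E=\mathrm{End}_R(\prod_{i\in\Omega}M)$. Suppose that $(R_i)_{i\in I}$ is a chain (totally ordered by inclusion) of subrings of $E$ such that $\bigcup_{i\in I}R_i=E$ and $|I|\le|\Omega|$. Then $E=R_i$ for some $i\in I$. In other words, $E$ is not the union of a chain of at most $|\Omega|$ proper subrings.
   Context: Rings are unital and associative; subrings of $E$ are understood as subrings of the ring $E$ (closed under addition, negation and multiplication and containing $0$ and $1$). *)

(* Defs.v *)
From HB Require Import structures.
From mathcomp Require Import all_boot all_order all_algebra.
From mathcomp Require Import boolp classical_sets functions cardinality.
Set Implicit Arguments. Unset Strict Implicit. Unset Printing Implicit Defensive.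
Import Order.TTheory GRing.Theory Num.Theory.
Local Open Scope classical_set_scope.
Local Open Scope ring_scope.

(* The direct product  prod_{i in Omega} M  is the lmodType (Omega -> M)
   with pointwise operations (instance from mathcomp-classical functions.v).
   The direct sum  bigoplus_{i in Omega} M  is its submodule of finitely
   supported functions, built below as a genuine lmodType [dsum Omega M]. *)

Section DirectSum.
Variables (R : pzRingType) (M : lmodType R) (Omega : Type).

Definition fin_supp (f : Omega -> M) : bool :=
  `[< finite_set [set i | f i != 0] >].

Lemma fin_supp_closed : GRing.subsemimod_closed fin_supp.
Proof.
have supp0 : forall f : Omega -> M, (fin_supp f) = `[< finite_set [set i | f i != 0] >] by [].
split; [split|].
- apply/asboolP; apply: (sub_finite_set _ (finite_set0 _)) => i /=.
  by rewrite eqxx.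
- move=> u v /asboolP fu /asboolP fv; apply/asboolP.
  have : finite_set ([set i | u i != 0] `|` [set i | v i != 0]) by rewrite finite_setU.
  apply: sub_finite_set => i /=.
  rewrite -[(u + v) i]/(u i + v i).
  case: (eqVneq (u i) 0) => [->|]; last by left.
  by rewrite add0r => ?; right.
- move=> a u /asboolP fu; apply/asboolP.
  move: fu; apply: sub_finite_set => i /=.
  rewrite -[(a *: u) i]/(a *: u i).
  by apply: contra_neq => ->; rewrite scaler0.
Qed.

HB.instance Definition _ := GRing.isSubmodClosed.Build R (Omega -> M) fin_supp
  fin_supp_closed.

Record dsum := DSum { dsum_val : Omega -> M; _ : dsum_val \in fin_supp }.
HB.instance Definition _ := [isSub for dsum_val].
HB.instance Definition _ := [Choice of dsum by <:].
HB.instance Definition _ := [SubChoice_isSubLmodule of dsum by <:].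
End DirectSum.

Definition EndR (R : pzRingType) (V : lmodType R) : set (V -> V) :=
  [set f | (forall u v, f (u + v) = f u + f v) /\
           (forall (a : R) u, f (a *: u) = a *: f u)].

Arguments EndR {R} V.

Definition is_subring_End (R : pzRingType) (V : lmodType R) (S : set (V -> V)) :=
  S `<=` EndR V /\
  S (fun _ => 0) /\ S id /\
  (forall f g, S f -> S g -> S (fun x => f x + g x)) /\
  (forall f, S f -> S (fun x => - f x)) /\
  (forall f g, S f -> S g -> S (f \o g)).

Definition no_small_chain_union (R : pzRingType) (V : lmodType R) (Omega : Type) :=
  forall (I : Type) (Rs : I -> set (V -> V)),
    ([set: I] #<= [set: Omega])%card ->
    (forall i, is_subring_End (Rs i)) ->
    (forall i j, Rs i `<=` Rs j \/ Rs j `<=` Rs i) ->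
    \bigcup_i Rs i = EndR V ->
    exists i, Rs i = EndR V.

(* Main.v *)
Require Import Defs.
From HB Require Import structures.
From mathcomp Require Import all_boot all_order all_algebra.
From mathcomp Require Import boolp classical_sets functions cardinality.
Local Open Scope classical_set_scope.
Lemma comparab (T : Type) (A C : set T) (t0 : T) :
  (exists g : T -> T, (forall x y, A x -> A y -> g x = g y -> x = y) /\ (forall x, A x -> C (g x)))
  \/ (exists h : T -> T, (forall x y, C x -> C y -> h x = h y -> x = y) /\ (forall x, C x -> A (h x))).
Proof.
pose P (H : set (T * T)) := (forall p, H p -> A p.1 /\ C p.2) /\
  (forall a c c', H (a,c) -> H (a,c') -> c = c') /\
  (forall a a' c, H (a,c) -> H (a',c) -> a = a').
have [H [[HAC [Hf Hi]] Hmax]] : exists H, P H /\ (forall B, H `<` B -> ~ P B).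
  apply: Zorn_bigcup => F FP Ftot; split; [|split].
  - by move=> p [X FX Xp]; have [+ _] := FP X FX; apply.
  - move=> a c c' [X FX Xp] [Y FY Yp].
    have [XY|YX] := Ftot X Y FX FY.
      by have [_ [HY _]] := FP Y FY; apply: (HY a); [apply: XY|].
    by have [_ [HX _]] := FP X FX; apply: (HX a); [|apply: YX].
  - move=> a a' c [X FX Xp] [Y FY Yp].
    have [XY|YX] := Ftot X Y FX FY.
      by have [_ [_ HY]] := FP Y FY; apply: (HY _ _ c); [apply: XY|].
    by have [_ [_ HX]] := FP X FX; apply: (HX _ _ c); [|apply: YX].
have [all|nall] := pselect (forall a, A a -> exists c, H (a, c)).
  have [g Hg] : exists g : T -> T, forall a, A a -> H (a, g a).
    suff /choice [g Hg] : forall a, exists c, A a -> H (a, c) by exists g.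
    move=> a; have [Aa|nAa] := pselect (A a).
      by have [c Hc] := all a Aa; exists c.
    by exists t0.
  left; exists g; split.
    move=> x y Ax Ay gxy; apply: (Hi x y (g x)); first exact: Hg.
    by rewrite gxy; apply: Hg.
  by move=> x Ax; have [] := HAC _ (Hg x Ax).
have [a [Aa Ha]] : exists a, A a /\ forall c, ~ H (a, c).
  apply: contra_notP nall => N a Aa; apply: contra_notP N => N'.
  by exists a; split => // c Hc; apply: N'; exists c.
have [all|nall'] := pselect (forall c, C c -> exists a, H (a, c)).
  have [h Hh] : exists h : T -> T, forall c, C c -> H (h c, c).
    suff /choice [h Hh] : forall c, exists a, C c -> H (a, c) by exists h.
    move=> c; have [Cc|nCc] := pselect (C c).
      by have [a' Hc] := all c Cc; exists a'.
    by exists t0.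
  right; exists h; split.
    move=> x y Cx Cy hxy; apply: (Hf (h x) x y); first exact: Hh.
    by rewrite hxy; apply: Hh.
  by move=> x Cx; have [] := HAC _ (Hh x Cx).
have [c [Cc Hc]] : exists c, C c /\ forall a, ~ H (a, c).
  apply: contra_notP nall' => N c Cc; apply: contra_notP N => N'.
  by exists c; split => // a' Hc; apply: N'; exists a'.
exfalso; apply: (Hmax (H `|` [set (a, c)])).
  split; first by move=> p Hp; left.
  by move=> /(_ (a, c) (or_intror erefl)); apply: Ha.
split; [|split].
- by move=> p [/HAC//|->].
- move=> a1 c1 c2 [H1|E1] [H2|E2].
  + exact: Hf H1 H2.
  + by case: E2 => ea _; rewrite ea in H1; case: (Ha _ H1).
  + by case: E1 => ea _; rewrite ea in H2; case: (Ha _ H2).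
  + by case: E1 => _ ->; case: E2 => _ ->.
- move=> a1 a2 c1 [H1|E1] [H2|E2].
  + exact: Hi H1 H2.
  + by case: E2 => _ ec; rewrite ec in H1; case: (Hc _ H1).
  + by case: E1 => _ ec; rewrite ec in H2; case: (Hc _ H2).
  + by case: E1 => -> _; case: E2 => -> _.
Qed.
Lemma card_le_fun (X Y : Type) : ([set: X] #<= [set: Y])%card -> exists f : X -> Y, injective f.
Proof.
move/card_leP => [f].
exists (fun i => set_val (f (SigSub (mem_set (A:=setT) (u := i) Logic.I)))).
move=> i j; rewrite set_valE => /val_inj/(@inj _ _ _ f).
by move=> /(_ (mem_set Logic.I) (mem_set Logic.I)) /(congr1 val).
Qed.
Lemma nat2_inj : exists c : nat * nat -> nat, injective c.
Proof. by apply: card_le_fun; have /card_eqPle[] := card_nat2. Qed.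

Lemma sq_inj (T : Type) : infinite_set [set: T] -> exists f : T * T -> T, injective f.
Proof.
move=> /infiniteP /card_le_fun [n ninj].
have [c cinj] := nat2_inj.
pose G0 : set ((T * T) * T) := [set q | exists a b, q = ((n a, n b), n (c (a, b)))].
pose fld (G : set ((T * T) * T)) (t : T) :=
  exists p x, G (p, x) /\ (t = p.1 \/ t = p.2 \/ t = x).
pose P (G : set ((T * T) * T)) := (G = set0 \/ G0 `<=` G) /\
  (forall p x y, G (p, x) -> G (p, y) -> x = y) /\
  (forall p q x, G (p, x) -> G (q, x) -> p = q) /\
  (forall a b, fld G a -> fld G b -> exists x, G ((a, b), x)).
have PG0 : P G0.
  split; [by right|split; [|split]].
  - move=> p x y [a [b E1]] [a' [b' E2]].
    case: E1 => ? ?; subst p x.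
    by case: E2 => /ninj ea /ninj eb ->; rewrite ea eb.
  - move=> p q x [a [b E1]] [a' [b' E2]].
    case: E1 => ? ?; subst p x.
    by case: E2 => ? /ninj /cinj [ea eb]; subst q; rewrite ea eb.
  - have fl : forall t, fld G0 t -> exists k, t = n k.
      move=> t [p [x [[a [b E]] ht]]]; case: E => ? ?; subst p x.
      by case: ht => [->|[->|->]] /=; eexists.
    move=> a b /fl [ka ->] /fl [kb ->].
    by exists (n (c (ka, kb))); exists ka, kb.
have [G [[Gb [Hf [Hi Ht]]] Hmax]] : exists G, P G /\ (forall B, G `<` B -> ~ P B).
  apply: Zorn_bigcup => F FP Ftot.
  have bigger : forall X Y, F X -> F Y -> exists2 Z, F Z & X `<=` Z /\ Y `<=` Z.
    move=> X Y FX FY; have [XY|YX] := Ftot X Y FX FY.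
      by exists Y => //; split.
    by exists X => //; split.
  split; [|split; [|split]].
  - have [[X [FX XG]]|nX] := pselect (exists X, F X /\ G0 `<=` X).
      by right => q /XG Xq; exists X.
    left; apply/seteqP; split => // q [X FX Xq].
    have [|X0] := (FP X FX).1; first by move=> E; rewrite E in Xq.
    by case: nX; exists X.
  - move=> p x y [X FX Xp] [Y FY Yp].
    have [Z FZ [XZ YZ]] := bigger X Y FX FY.
    by have [_ [HZ _]] := FP Z FZ; apply: (HZ p); [apply: XZ|apply: YZ].
  - move=> p q x [X FX Xp] [Y FY Yp].
    have [Z FZ [XZ YZ]] := bigger X Y FX FY.
    by have [_ [_ [HZ _]]] := FP Z FZ; apply: (HZ _ _ x); [apply: XZ|apply: YZ].
  - move=> a b [p [x [[X FX Xp] ea]]] [p' [x' [[Y FY Yp] eb]]].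
    have [Z FZ [XZ YZ]] := bigger X Y FX FY.
    have [_ [_ [_ HZ]]] := FP Z FZ; have [] := HZ a b.
    + by exists p, x; split => //; apply: XZ.
    + by exists p', x'; split => //; apply: YZ.
    by move=> x0 Zx0; exists x0; exists Z.
have G0G : G0 `<=` G.
  case: Gb => // G00; exfalso; apply: (Hmax G0) => //; split.
    by rewrite G00.
  rewrite G00 => /(_ ((n 0, n 0), n (c (0, 0)))%N) []; by exists 0%N, 0%N.
pose D := fld G.
have GD : forall p x, G (p, x) -> D p.1 /\ D p.2 /\ D x.
  move=> p x Gp; split; [|split]; exists p, x; split => //; by auto.
have Dn : forall k, D (n k).
  move=> k; exists (n k, n k), (n (c (k, k))); split; last by left.
  by apply: G0G; exists k, k.
have [f Hfun] : exists f : T * T -> T, forall a b, D a -> D b -> G ((a, b), f (a, b)).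
  suff /choice [f Hf'] : forall p, exists x, D p.1 -> D p.2 -> G (p, x).
    by exists f => a b Da Db; apply: (Hf' (a, b)).
  move=> [a b] /=; have [[Da Db]|N] := pselect (D a /\ D b).
    by have [x Gx] := Ht a b Da Db; exists x.
  by exists (n 0%N) => Da Db; case: N.
have fD : forall a b, D a -> D b -> D (f (a, b)).
  by move=> a b Da Db; have [_ []] := GD _ _ (Hfun a b Da Db).
have finj : forall a b a' b', D a -> D b -> D a' -> D b' ->
    f (a, b) = f (a', b') -> a = a' /\ b = b'.
  move=> a b a' b' Da Db Da' Db' E.
  have := Hi _ _ _ (Hfun a b Da Db); rewrite E => /(_ _ (Hfun a' b' Da' Db')).
  by case.
have n01 : n 0%N <> n 1%N by move/ninj.
have [[g [ginj gC]]|[h [hinj hD]]] := @comparab T (D : set T) (~` D) (n 0%N); last first.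
  pose F t := if pselect (D t) is left _ then f (n 0%N, t) else f (n 1%N, h t).
  have FD : forall t, D (F t).
    by move=> t; rewrite /F; case: pselect => Dt; apply: fD => //; apply: hD.
  have Finj : injective F.
    move=> x y; rewrite /F; case: pselect => Dx; case: pselect => Dy.
    - by move=> E; have [] := finj _ _ _ _ (Dn _) Dx (Dn _) Dy E.
    - by move=> E; have [] := finj _ _ _ _ (Dn _) Dx (Dn _) (hD _ Dy) E.
    - by move=> E; have [E' _] := finj _ _ _ _ (Dn _) (hD _ Dx) (Dn _) Dy E; case: n01.
    - by move=> E; have [_ E'] := finj _ _ _ _ (Dn _) (hD _ Dx) (Dn _) (hD _ Dy) E; apply: hinj.
  exists (fun p => f (F p.1, F p.2)) => [[a b] [a' b']] /= E.
  by have [/Finj -> /Finj ->] := finj _ _ _ _ (FD a) (FD b) (FD a') (FD b') E.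
exfalso.
pose em (u : bool) t := if u then t else g t.
have emD : forall u a, D a -> (D (em u a) <-> u).
  by move=> [] a Da //=; split => // /(gC _ Da).
have eminj : forall u u' a a', D a -> D a' -> em u a = em u' a' -> u = u' /\ a = a'.
  move=> u u' a a' Da Da' E.
  have uu : u = u'.
    move: (emD u a Da) (emD u' a' Da'); rewrite E.
    by case: u E; case: u' => // _ h1 h2; [move: (h2.1 (h1.2 isT))|move: (h1.1 (h2.2 isT))].
  by split => //; move: E; rewrite -uu /em; case: u {uu} => // E; apply: ginj.
pose nb (u : bool) := n (nat_of_bool u).
have nbinj : forall u v, nb u = nb v -> u = v by move=> [] [] // /ninj.
pose code u v a b := f (f (nb u, nb v), f (a, b)).
have codeD : forall u v a b, D a -> D b -> D (code u v a b).
  by move=> u v a b Da Db; apply fD; apply fD => //; apply Dn.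
have codeinj : forall u v a b u' v' a' b', D a -> D b -> D a' -> D b' ->
    code u v a b = code u' v' a' b' -> [/\ u = u', v = v', a = a' & b = b'].
  move=> u v a b u' v' a' b' Da Db Da' Db' E.
  have Dnb : forall w, D (nb w) by move=> w; apply Dn.
  have [E1 E2] := finj _ _ _ _ (fD _ _ (Dnb u) (Dnb v)) (fD _ _ Da Db)
    (fD _ _ (Dnb u') (Dnb v')) (fD _ _ Da' Db') E.
  have [/nbinj -> /nbinj ->] := finj _ _ _ _ (Dnb u) (Dnb v) (Dnb u') (Dnb v') E1.
  by have [-> ->] := finj _ _ _ _ Da Db Da' Db' E2.
pose E : set ((T * T) * T) := [set q | exists u v a b, ~~ (u && v) /\ D a /\ D b /\
   q = ((em u a, em v b), g (code u v a b))].
pose G' := G `|` E.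
apply: (Hmax G').
  split; first by move=> q Gq; left.
  move=> /(_ ((g (n 0%N), g (n 0%N)), g (code false false (n 0%N) (n 0%N)))) H.
  have : G ((g (n 0%N), g (n 0%N)), g (code false false (n 0%N) (n 0%N))).
    by apply: H; right; exists false, false, (n 0%N), (n 0%N).
  by move=> /GD [/= D1 _]; apply: (gC _ (Dn 0%N)).
have GE : forall p x p' x', G (p, x) -> E (p', x') -> p <> p'.
  move=> p x p' x' /GD [D1 [D2 _]] [u [v [a [b [uv [Da [Db [-> _]]]]]]]] pp.
  move: uv; rewrite pp /= in D1 D2.
  by move: D1 D2; rewrite (emD _ _ Da) (emD _ _ Db) => -> ->.
split; [|split; [|split]].
- by right => q /G0G; left.
- move=> p x y [Gx|Ex] [Gy|Ey].
  + exact: Hf Gx Gy.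
  + by case: (GE _ _ _ _ Gx Ey).
  + by case: (GE _ _ _ _ Gy Ex).
  + move: Ex Ey => [u [v [a [b [_ [Da [Db [-> ->]]]]]]]].
    move=> [u' [v' [a' [b' [_ [Da' [Db' []]]]]]]].
    move=> e1 e2 ->.
    have [-> ->] := eminj _ _ _ _ Da Da' e1.
    by have [-> ->] := eminj _ _ _ _ Db Db' e2.
- move=> p q x [Gx|Ex] [Gy|Ey].
  + exact: Hi Gx Gy.
  + move: Ey => [u [v [a [b [_ [Da [Db [_ ex]]]]]]]].
    have [_ [_ +]] := GD _ _ Gx; rewrite ex => /(gC _ (codeD _ _ _ _ Da Db)) [].
  + move: Ex => [u [v [a [b [_ [Da [Db [_ ex]]]]]]]].
    have [_ [_ +]] := GD _ _ Gy; rewrite ex => /(gC _ (codeD _ _ _ _ Da Db)) [].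
  + move: Ex Ey => [u [v [a [b [_ [Da [Db [-> ex]]]]]]]].
    move=> [u' [v' [a' [b' [_ [Da' [Db' [-> ex']]]]]]]].
    move: ex'; rewrite ex => e.
    have := ginj _ _ (codeD _ _ _ _ Da Db) (codeD _ _ _ _ Da' Db') e.
    by move=> e'; have [-> -> -> ->] := codeinj _ _ _ _ _ _ _ _ Da Db Da' Db' e'.
- have fl : forall t, fld G' t -> D t \/ exists a, D a /\ t = g a.
    move=> t [p [x [[Gx|Ex] ht]]].
      by have := GD _ _ Gx; left; case: ht => [->|[->|->]]; tauto.
    move: Ex => [u [v [a [b [_ [Da [Db Eq]]]]]]].
    case: Eq => ? ?; subst p x.
    case: ht => [->|[->|->]] /=.
    + by case: u; [left|right; exists a].
    + by case: v; [left|right; exists b].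
    + by right; exists (code u v a b); split => //; apply: codeD.
  move=> a b /fl [Da|[a' [Da' ->]]] /fl [Db|[b' [Db' ->]]].
  + have [x Gx] := Ht a b Da Db; by exists x; left.
  + exists (g (code true false a b')); right; exists true, false, a, b'; by [].
  + exists (g (code false true a' b)); right; exists false, true, a', b; by [].
  + exists (g (code false false a' b')); right; exists false, false, a', b'; by [].
Qed.

Local Open Scope ring_scope.
Import GRing.Theory.
Set Implicit Arguments. Unset Strict Implicit.

Definition xF (R : pzRingType) (M : lmodType R) (Omega : Type) (phi : Omega * Omega -> Omega)
  (pi : Omega -> Omega * Omega) (j : Omega) (v : Omega -> M) : Omega -> M :=
  fun w => if pselect (exists o, phi (j, o) = w) is left _ then v (pi w).2 else 0.
Definition yF (M : Type) (Omega : Type) (phi : Omega * Omega -> Omega) (j : Omega)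
  (v : Omega -> M) : Omega -> M := fun o => v (phi (j, o)).

Lemma yxF (R : pzRingType) (M : lmodType R) (Omega : Type) (phi : Omega * Omega -> Omega) (pi : Omega -> Omega * Omega)
  (pK : forall p : Omega * Omega, pi (phi p) = p) j (v : Omega -> M) :
  yF phi j (xF phi pi j v) = v.
Proof.
apply/funext => o; rewrite /yF /xF; case: pselect => [_|[]]; last by exists o.
by rewrite pK.
Qed.

Lemma EndR_fun (R : pzRingType) (M : lmodType R) (Omega : Type) (f : (Omega -> M) -> Omega -> M) :
  (forall u v w, f (u + v) w = f u w + f v w) -> (forall a u w, f (a *: u) w = a *: f u w) ->
  EndR (Omega -> M) f.
Proof. by move=> fD fZ; split => [u v|a u]; apply/funext => w; [apply: fD|apply: fZ]. Qed.

Lemma xF_End (R : pzRingType) (M : lmodType R) (Omega : Type) (phi : Omega * Omega -> Omega) (pi : Omega -> Omega * Omega) (j : Omega) :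
  EndR (Omega -> M) (xF (M:=M) phi pi j).
Proof.
apply: EndR_fun => [u v w|a u w]; rewrite /xF; case: pselect => _ //.
  by rewrite addr0.
by rewrite scaler0.
Qed.

Lemma yF_End (R : pzRingType) (M : lmodType R) (Omega : Type) (phi : Omega * Omega -> Omega) (j : Omega) :
  EndR (Omega -> M) (yF (M:=M) phi j).
Proof. by apply: EndR_fun. Qed.

Lemma EndR0 (R : pzRingType) (V : lmodType R) f : EndR V f -> f 0 = 0.
Proof.
by move=> [fD _]; apply: (addrI (f 0)); rewrite -fD !addr0.
Qed.

Definition gF (R : pzRingType) (M : lmodType R) (Omega : Type) (phi : Omega * Omega -> Omega)
  (pi : Omega -> Omega * Omega) (F : Omega -> (Omega -> M) -> Omega -> M) (v : Omega -> M) : Omega -> M :=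
  fun w => if pselect (exists q, phi q = w) is left _ then F (pi w).1 (yF phi (pi w).1 v) (pi w).2 else 0.

Lemma glue_fun (R : pzRingType) (M : lmodType R) (Omega : Type) (phi : Omega * Omega -> Omega) (pi : Omega -> Omega * Omega)
  (pK : forall p : Omega * Omega, pi (phi p) = p) :
  forall F : Omega -> (Omega -> M) -> Omega -> M, (forall j, EndR (Omega -> M) (F j)) ->
     exists g, EndR (Omega -> M) g /\ forall j, (yF phi j \o g) \o xF phi pi j = F j.
Proof.
move=> F FE; exists (gF phi pi F); split.
  apply: EndR_fun => [u v w|a u w]; rewrite /gF; case: pselect => _.
  - have -> : yF phi (pi w).1 (u + v) = yF phi (pi w).1 u + yF phi (pi w).1 v by [].
    by rewrite (FE _).1.
  - by rewrite addr0.
  - have -> : yF phi (pi w).1 (a *: u) = a *: yF phi (pi w).1 u by [].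
    by rewrite (FE _).2.
  - by rewrite scaler0.
move=> j; apply/funext => v; apply/funext => o.
rewrite /= {1}/yF /gF; case: pselect => [_|[]]; last by exists (j, o).
by rewrite pK /= yxF.
Qed.




Lemma chain_abstract (R : pzRingType) (V : lmodType R) (J : Type) (x y : J -> V -> V) :
  (forall j, EndR V (x j)) -> (forall j, EndR V (y j)) ->
  (forall F : J -> V -> V, (forall j, EndR V (F j)) ->
     exists g, EndR V g /\ forall j, (y j \o g) \o x j = F j) ->
  no_small_chain_union V J.
Proof.
move=> xE yE glue I Rs cIJ sub chain U.
have [e einj] := @card_le_fun I J cIJ.
have [//|N] := pselect (exists i, Rs i = EndR V).
exfalso.
have mem : forall h, EndR V h -> exists k, Rs k h.
  move=> h Eh; have : (\bigcup_i Rs i) h by rewrite U.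
  by case=> k _ Hk; exists k.
have bigger : forall i j, exists l, Rs i `<=` Rs l /\ Rs j `<=` Rs l.
  by move=> i j; have [ij|ji] := chain i j; [exists j; split|exists i; split].
have step : forall i, exists l, Rs i `<=` Rs l /\ Rs l (x (e i)) /\ Rs l (y (e i)).
  move=> i; have [a Ha] := mem _ (xE (e i)); have [b Hb] := mem _ (yE (e i)).
  have [l1 [il1 al1]] := bigger i a; have [l [l1l bl]] := bigger l1 b.
  exists l; split; first by move=> h /il1 /l1l.
  by split; [apply/l1l/al1|apply: bl].
have [l Hl] := choice step.
have wit : forall i, exists f, EndR V f /\ ~ Rs (l i) f.
  move=> i; apply: contrapT => nf; apply: N; exists (l i).
  apply/seteqP; split; first by have [+ _] := sub (l i).
  move=> h Eh; apply: contrapT => nh; apply: nf; by exists h.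
have [fi Hfi] := choice wit.
have famF : forall j, exists h, EndR V h /\ forall i, e i = j -> h = fi i.
  move=> j; have [[i ij]|nij] := pselect (exists i, e i = j).
    exists (fi i); split; first exact: (Hfi i).1.
    by move=> i' i'j; rewrite -i'j in ij; rewrite (einj _ _ ij).
  exists id; split; first by split.
  by move=> i ij; case: nij; exists i.
have [F HF] := choice famF.
have [g [Eg Hg]] := glue F (fun j => (HF j).1).
have [m Rmg] := mem _ Eg.
have [ml [xm ym]] := Hl m.
have [_ [_ [_ [_ [_ comp]]]]] := sub (l m).
apply: (Hfi m).2.
rewrite -((HF (e m)).2 m erefl) -Hg.
by apply comp; [apply comp; [exact: ym|exact: ml]|exact: xm].
Qed.

Lemma finP (R : pzRingType) (M : lmodType R) (Omega : Type) (f : Omega -> M) :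
  f \in fin_supp (M:=M) (Omega:=Omega) <-> finite_set [set i | f i != 0].
Proof. by rewrite inE. Qed.

Lemma dsum_case (R : pzRingType) (M : lmodType R) (Omega : Type)
  (phi : Omega * Omega -> Omega) (pi : Omega -> Omega * Omega)
  (phiI : injective phi) (pK : forall p, pi (phi p) = p) :
  no_small_chain_union (dsum M Omega) Omega.
Proof.
have vfin : forall v : dsum M Omega, finite_set [set i | dsum_val v i != 0].
  by move=> v; apply/finP; apply: valP.
have xfin : forall j (v : dsum M Omega), xF phi pi j (dsum_val v) \in fin_supp (M:=M) (Omega:=Omega).
  move=> j v; apply/finP.
  apply: (sub_finite_set _ (finite_image (fun o => phi (j, o)) (vfin v))).
  move=> w /=; rewrite /xF; case: pselect => [[o ow] nz|]; last by rewrite eqxx.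
  by exists o => //=; move: nz; rewrite -ow pK.
have yfin : forall j (v : dsum M Omega), yF phi j (dsum_val v) \in fin_supp (M:=M) (Omega:=Omega).
  move=> j v; apply/finP; apply: (card_le_finite _ (vfin v)).
  apply: (@card_ge_preimage _ _ _ (fun o => phi (j, o))).
  by move=> o o' _ _ /phiI [].
pose XD j v := DSum (xfin j v).
pose YD j v := DSum (yfin j v).
have EndD : forall f : dsum M Omega -> dsum M Omega, 
    (forall u v, dsum_val (f (u + v)) = dsum_val (f u) + dsum_val (f v)) ->
    (forall a u, dsum_val (f (a *: u)) = a *: dsum_val (f u)) -> EndR (dsum M Omega) f.
  by move=> f fD fZ; split => [u v|a u]; apply: val_inj; [apply: fD|apply: fZ].
have XE : forall j, EndR (dsum M Omega) (XD j).
  move=> j; apply: EndD => [u v|a u] /=.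
    exact: (xF_End M phi pi j).1.
  exact: (xF_End M phi pi j).2.
have YE : forall j, EndR (dsum M Omega) (YD j).
  move=> j; apply: EndD => [u v|a u] //=.
apply: (chain_abstract XE YE) => F FE.
pose gv (v : dsum M Omega) : Omega -> M := fun w =>
  if pselect (exists q, phi q = w) is left _ then dsum_val (F (pi w).1 (YD (pi w).1 v)) (pi w).2 else 0.
have gfin : forall v, gv v \in fin_supp (M:=M) (Omega:=Omega).
  move=> v; apply/finP.
  pose Js := fst @` (phi @^-1` [set i | dsum_val v i != 0]).
  have Jsfin : finite_set Js.
    apply: finite_image; apply: (card_le_finite _ (vfin v)).
    by apply: card_ge_preimage => p q _ _ /phiI.
  apply: (sub_finite_set _ (bigcup_finite (F := fun j =>
    (fun o => phi (j, o)) @` [set o | dsum_val (F j (YD j v)) o != 0]) Jsfin _)); last first.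
    by move=> j _; apply: finite_image; apply: vfin.
  move=> w /=; rewrite /gv; case: pselect => [[q qw] nz|]; last by rewrite eqxx.
  move: nz; rewrite -qw pK; case: q {qw} => j o /= nz.
  exists j; last by exists o.
  apply: contrapT => nJ.
  have Y0 : YD j v = 0.
    apply: val_inj; apply/funext => o' /=; rewrite /yF.
    apply: contrapT => /eqP nz'; apply: nJ; exists (j, o') => //.
  by move: nz; rewrite Y0 (EndR0 (FE j)) eqxx.
pose g v := DSum (gfin v).
exists g; split.
  apply: EndD => [u v|a u]; apply/funext => w.
    1: change (gv (u + v) w = gv u w + gv v w).
    2: change (gv (a *: u) w = a *: gv u w).
  1-2: rewrite /gv; case: pselect => _.
  - have -> : YD (pi w).1 (u + v) = YD (pi w).1 u + YD (pi w).1 v.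
      by apply: (YE _).1.
    by rewrite (FE _).1.
  - by rewrite addr0.
  - have -> : YD (pi w).1 (a *: u) = a *: YD (pi w).1 u by apply: (YE _).2.
    by rewrite (FE _).2.
  - by rewrite scaler0.
move=> j; apply/funext => v; apply: val_inj; apply/funext => o.
rewrite /= {1}/yF /gv; case: pselect => [_|[]]; last by exists (j, o).
rewrite pK /=.
have -> : YD j (XD j v) = v by apply: val_inj; rewrite /= yxF.
by [].
Qed.

Lemma fun_case (R : pzRingType) (M : lmodType R) (Omega : Type)
  (phi : Omega * Omega -> Omega) (pi : Omega -> Omega * Omega)
  (pK : forall p, pi (phi p) = p) :
  no_small_chain_union (Omega -> M) Omega.
Proof.
apply: (chain_abstract (xF_End M phi pi) (yF_End M phi)).
exact: glue_fun.
Qed.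

Unset Implicit Arguments.

Theorem theorem3 (R : nzRingType) (M : lmodType R) (Omega : Type) :
  (exists m : M, m != 0) ->
  infinite_set [set: Omega] ->
  no_small_chain_union (dsum M Omega) Omega /\
  no_small_chain_union (Omega -> M) Omega.
Proof.
move=> _ inf.
have [phi phiI] := @sq_inj Omega inf.
have [w0 _] := infinite_setN0 inf.
have /choice [pi Hpi] : forall w, exists p, (exists q, phi q = w) -> phi p = w.
  by move=> w; have [[q qw]|nq] := pselect (exists q, phi q = w);
       [exists q | exists (w0, w0)].
have pK : forall p, pi (phi p) = p.
  by move=> p; apply: phiI; apply: Hpi; exists p.
split; [exact: dsum_case phiI pK | exact: fun_case pK].
Qed.
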